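(* Let $\mathcal C$ be the UM simplex $(n,k)$ code. Then for every $s\ge 0$ the binary block code generated by $G_{\rm total}$ has minimum distance $3\cdot2^{k-1}$. Moreover, the column distances and free distance of $\mathcal C$ satisfy $d_0=2^k$ and $d_{free}=d_j=3\cdot2^{k-1}$ for all $j\ge1$.
   Context: Let $k\ge2$ and let $G\in\mathbb F_2^{k\times(2^k-1)}$ be a generator matrix of the binary simplex code (columns are all distinct nonzero vectors of $\mathbb F_2^k$); set $n=2(2^k-1)$. The UM simplex $(n,k)$ code $\mathcal C$ is the binary convolutional code $\{u(D)G(D): u(D)\in\mathbb F_2^k[D]\}\subseteq\mathbb F_2^n[D]$ with encoder $G(D)=G_0+G_1D$, $G_0=[G\ G]$, $G_1=[G\ 0]\in\mathbb F_2^{k\times n}$. For $u(D)=\sum_{i=0}^s u_iD^i$, the codeword $c(D)=\sum_{i=0}^{s+1}c_iD^i$ satisfies $(c_0,\dots,c_{s+1})=(u_0,\dots,u_s)G_{\rm total}$, where $G_{\rm total}\in\mathbb F_2^{(s+1)k\times(s+2)n}$ is the block matrix whose $i$-th block row ($i=0,\dots,s$) has $G_0$ in block column $i$, $G_1$ in block column $i+1$ and zeros elsewhere (block columns of width $n$). The free distance is $d_{free}=\min\{wt(c(D)): 0\ne c(D)\in\mathcal C\}$ with $wt(c(D))=\sum_i wt(c_i)$ (Hamming weight). The $j$-th column distance is $d_j=\min\{wt(c_0+c_1D+\dots+c_jD^j): \sum_i c_iD^i\in\mathcal C,\ c_0\ne0\}$. *)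

(* Defs.v *)
From HB Require Import structures.
From mathcomp Require Import all_boot all_order all_algebra.
Set Implicit Arguments. Unset Strict Implicit. Unset Printing Implicit Defensive.
Import GRing.Theory.
Local Open Scope ring_scope.

Definition wt (m : nat) (v : 'rV['F_2]_m) : nat := #|[set j | v 0 j != 0]|.

Definition is_min (P : nat -> Prop) (d : nat) : Prop :=
  P d /\ forall e, P e -> (d <= e)%N.

Definition simplex_gen (k : nat) (G : 'M['F_2]_(k, 2 ^ k - 1)) : Prop :=
  (forall j, col j G != 0) /\ injective (fun j => col j G).

(* n = 2(2^k-1) columns, written as m + m with m = 2^k-1. *)
Definition UM_G0 (k m : nat) (G : 'M['F_2]_(k, m)) : 'M['F_2]_(k, m + m) :=
  row_mx G G.
Definition UM_G1 (k m : nat) (G : 'M['F_2]_(k, m)) : 'M['F_2]_(k, m + m) :=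
  row_mx G 0.

Definition G_total (k m s : nat) (G : 'M['F_2]_(k, m)) :=
  @mxblock _ s.+1 s.+2 (fun _ => k) (fun _ => (m + m)%N)
    (fun i j => if val j == val i then UM_G0 G
                else if val j == (val i).+1 then UM_G1 G else 0).

Definition block_weights (k m s : nat) (G : 'M['F_2]_(k, m)) (w : nat) : Prop :=
  exists u, u *m G_total s G != 0 /\ wt (u *m G_total s G) = w.

(* Coefficient c_i of the codeword c(D) = u(D) G(D), where
   u(D) = sum_i u_i D^i is given by the sequence u = [u_0; ...; u_s]:
   c_i = u_i G0 + u_{i-1} G1. *)
Definition cw_coef (k m : nat) (G : 'M['F_2]_(k, m)) (u : seq 'rV['F_2]_k)
  (i : nat) : 'rV['F_2]_(m + m) :=
  nth 0 u i *m UM_G0 G + (if i is i'.+1 then nth 0 u i' else 0) *m UM_G1 G.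

(* Weight of the full codeword c(D) (degree <= size u). *)
Definition cw_wt (k m : nat) (G : 'M['F_2]_(k, m)) (u : seq 'rV['F_2]_k) : nat :=
  (\sum_(i < (size u).+1) wt (cw_coef G u i))%N.

Definition free_weights (k m : nat) (G : 'M['F_2]_(k, m)) (w : nat) : Prop :=
  exists u : seq 'rV['F_2]_k, (exists i, cw_coef G u i != 0) /\ cw_wt G u = w.

Definition column_weights (k m : nat) (G : 'M['F_2]_(k, m)) (j w : nat) : Prop :=
  exists u : seq 'rV['F_2]_k, cw_coef G u 0 != 0 /\
    (\sum_(i < j.+1) wt (cw_coef G u i))%N = w.

(* Main.v *)
Require Import Defs.
From mathcomp Require Import all_boot all_order all_algebra zify.
Set Implicit Arguments. Unset Strict Implicit. Unset Printing Implicit Defensive.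
Import GRing.Theory.
Local Open Scope ring_scope.

Lemma F2cases (a : 'F_2) : a = 0 \/ a = 1.
Proof. have := ltn_ord a; case: a => [[|[|//]] ?] _; [left|right]; exact/val_inj. Qed.

Lemma F2add1 (a b : 'F_2) : b != 0 -> (a + b != 0) = (a == 0).
Proof. by case: (F2cases a) => ->; case: (F2cases b) => ->. Qed.

Lemma wt0 m : wt (0 : 'rV['F_2]_m) = 0%N.
Proof. rewrite /wt; apply/eqP; rewrite cards_eq0; apply/eqP/setP => j; by rewrite !inE mxE eqxx. Qed.

Lemma wtE m (v : 'rV['F_2]_m) : wt v = (\sum_j (v ord0 j != 0%R))%N.
Proof. by rewrite /wt -sum1_card big_mkcond /=; apply: eq_bigr => j _; rewrite inE; case: (_ != _). Qed.

Lemma wt_row_mx m n (a : 'rV['F_2]_m) (b : 'rV['F_2]_n) : wt (row_mx a b) = (wt a + wt b)%N.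
Proof. by rewrite !wtE big_split_ord /=; congr (_ + _)%N; apply: eq_bigr => j _; rewrite ?row_mxEl ?row_mxEr. Qed.

Lemma card_F2cV k : #|{: 'cV['F_2]_k}| = (2 ^ k)%N.
Proof. by rewrite card_mx card_Fp // muln1. Qed.

Lemma count_half k (x : 'rV['F_2]_k) : x != 0 ->
  #|[set v : 'cV['F_2]_k | (x *m v) 0 0 != 0]| = (2 ^ (k - 1))%N.
Proof.
move=> x0.
have [i0 hi0] : exists i0, x 0 i0 != 0.
  apply/existsP; apply: contraR x0 => /existsPn h; apply/eqP/matrixP => i j.
  by rewrite ord1 mxE; apply/eqP; have := h j; rewrite negbK.
set A := [set v : 'cV['F_2]_k | (x *m v) 0 0 != 0].
pose t (v : 'cV['F_2]_k) := v + delta_mx i0 0.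
have tinj : injective t by move=> a b; apply: addIr.
have tE v : (x *m t v) 0 0 = (x *m v) 0 0 + x 0 i0.
  rewrite mulmxDr mxE.
  by have := colE i0 x; move/matrixP/(_ 0 0); rewrite mxE => ->.
have h1 : (#|A| <= #|~: A|)%N.
  rewrite -(card_imset _ tinj); apply: subset_leq_card; apply/subsetP => w.
  case/imsetP => v; rewrite !inE => hv ->; rewrite tE F2add1 //.
have h2 : (#|~: A| <= #|A|)%N.
  rewrite -(card_imset _ tinj); apply: subset_leq_card; apply/subsetP => w.
  case/imsetP => v; rewrite !inE negbK => hv ->; rewrite tE F2add1 //.
have := cardsC A; rewrite card_F2cV.
have k0 : (0 < k)%N.
  case: k x i0 {x0 hi0 A tinj tE h1 h2 t} => [|//] x i0; exact: (ltn_ord i0).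
rewrite -[k in (2 ^ k)%N](subnK k0) addn1 expnS => h; lia.
Qed.

Lemma wt_mulG k (G : 'M['F_2]_(k, 2 ^ k - 1)) : simplex_gen G ->
  forall x : 'rV['F_2]_k, wt (x *m G) = (if x == 0%R then 0 else 2 ^ (k - 1))%N.
Proof.
case=> hnz hinj x; have [->|x0] := eqVneq x 0.
  rewrite mul0mx /wt; apply/eqP; rewrite cards_eq0; apply/eqP/setP => j.
  by rewrite !inE mxE eqxx.
pose f j := col j G.
have fE j : (x *m G) 0 j = (x *m f j) 0 0 by rewrite !mxE; apply: eq_bigr => i _; rewrite mxE.
have imf : f @: setT = [set v : 'cV['F_2]_k | v != 0].
  apply/eqP; rewrite eqEcard; apply/andP; split.
    by apply/subsetP => v /imsetP [j _ ->]; rewrite inE hnz.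
  rewrite (card_imset _ hinj) cardsT card_ord.
  have -> : [set v : 'cV['F_2]_k | v != 0] = ~: [set 0].
    by apply/setP => v; rewrite !inE.
  by rewrite cardsC1 card_F2cV subn1.
have E : f @: [set j | (x *m G) 0 j != 0] = [set v : 'cV['F_2]_k | (x *m v) 0 0 != 0].
  apply/setP => v; rewrite inE; apply/imsetP/idP.
    by case=> j; rewrite inE fE => h ->.
  move=> h; have : v \in f @: setT.
    rewrite imf inE; apply: contraNneq h => ->; by rewrite mulmx0 mxE.
  by case/imsetP => j _ vE; exists j => //; rewrite inE fE -vE.
by rewrite /wt -(count_half x0) -E (card_imset _ hinj).
Qed.
Section Comb.
Variable V : zmodType.
Definition prevs (u : seq V) (i : nat) : V := if i is i'.+1 then nth 0 u i' else 0.
Definition gg (u : seq V) (i : nat) : nat :=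
  addn (nth 0 u i + prevs u i != 0) (nth 0 u i != 0).

Lemma sum_ge2 (g : nat -> nat) N b : (b.+1 < N)%N ->
  (g b + g b.+1 <= \sum_(i < N) g i)%N.
Proof.
move=> hb; rewrite -(big_mkord xpredT) (@big_cat_nat _ _ _ b 0 N) //=; last by lia.
rewrite (@big_ltn _ _ _ b N); last by lia.
rewrite (@big_ltn _ _ _ b.+1 N); last by lia.
lia.
Qed.

Lemma sum_ge3 (g : nat -> nat) N b : (b.+2 < N)%N ->
  (g b + g b.+1 + g b.+2 <= \sum_(i < N) g i)%N.
Proof.
move=> hb; rewrite -(big_mkord xpredT) (@big_cat_nat _ _ _ b 0 N) //=; last by lia.
rewrite (@big_ltn _ _ _ b N); last by lia.
rewrite (@big_ltn _ _ _ b.+1 N); last by lia.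
rewrite (@big_ltn _ _ _ b.+2 N); last by lia.
lia.
Qed.

Lemma comb (u : seq V) : (exists i, nth 0 u i != 0) ->
  (3 <= \sum_(i < (size u).+1) gg u i)%N.
Proof.
move=> hex.
have hb : forall i, nth 0 u i != 0 -> (i <= size u)%N.
  move=> i hi; rewrite leqNgt; apply/negP => h; move: hi; rewrite nth_default ?eqxx //; exact: ltnW h.
case: (ex_maxnP hex hb) => a Pa amax.
have asz : (a < size u)%N.
  rewrite ltnNge; apply: contra Pa => h; rewrite nth_default //.
have ua1 : nth 0 u a.+1 = 0.
  apply/eqP; apply: contraT => h; have := amax _ h; lia.
have g1 : gg u a.+1 = 1%N by rewrite /gg /= ua1 add0r Pa eqxx.
have [h2|h2] := boolP (nth 0 u a + prevs u a != 0).
  have ga : gg u a = 2%N by rewrite /gg h2 Pa.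
  have := @sum_ge2 (gg u) (size u).+1 a; rewrite ga g1; lia.
move: h2; rewrite negbK; case: a Pa amax asz ua1 g1 => [|a'] Pa amax asz ua1 g1.
  by rewrite /prevs addr0 (negPf Pa).
rewrite /prevs => /eqP h.
have Pa' : nth 0 u a' != 0.
  apply: contra Pa => /eqP h'; rewrite h' addr0 in h; by rewrite h.
have ga' : (1 <= gg u a')%N by rewrite /gg Pa'; lia.
have ga : (1 <= gg u a'.+1)%N by rewrite /gg Pa; lia.
have := @sum_ge3 (gg u) (size u).+1 a'; rewrite g1; lia.
Qed.
End Comb.

Lemma cwE k m (G : 'M['F_2]_(k, m)) u i :
  cw_coef G u i = nth 0 u i *m UM_G0 G + prevs u i *m UM_G1 G.
Proof. by case: i. Qed.

Lemma wt_cw k (G : 'M['F_2]_(k, 2 ^ k - 1)) : simplex_gen G ->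
  forall u i, wt (cw_coef G u i) = (2 ^ (k - 1) * gg u i)%N.
Proof.
move=> hG u i; rewrite cwE /UM_G0 /UM_G1 !mul_mx_row mulmx0 add_row_mx addr0.
rewrite wt_row_mx -mulmxDl !(wt_mulG hG) /gg.
by case: eqP => _; case: eqP => _ /=; lia.
Qed.

Lemma cw_nz k m (G : 'M['F_2]_(k, m)) u :
  (exists i, cw_coef G u i != 0) -> exists i, nth 0 u i != 0.
Proof.
case=> i hi; case E: (nth 0 u i == 0); last by exists i; rewrite E.
case: i hi E => [|i] hi E.
  by rewrite cwE /prevs (eqP E) !mul0mx addr0 eqxx in hi.
exists i; apply: contra hi => /eqP h; by rewrite cwE /= (eqP E) h !mul0mx addr0.
Qed.
Lemma wt_mxrow n m (B : 'I_n -> 'rV['F_2]_m) :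
  wt (@mxrow _ n (fun _ => m) 1 B) = (\sum_j wt (B j))%N.
Proof.
rewrite wtE.
under [RHS]eq_bigr do rewrite wtE.
rewrite (@sig_big_dep _ _ _ _ (fun _ => 'I_m) xpredT (fun _ => xpredT)
   (fun j l => nat_of_bool (B j 0 l != 0))) /=.
rewrite (reindex (@tagnat.sig n (fun _ => m))) /=; last exact: onW_bij tagnat.sig_bij.
by apply: eq_bigr => t _; rewrite mxE.
Qed.

Definition useq k s (u : 'rV['F_2]_(\sum_(i < s.+1) k)) : seq 'rV['F_2]_k :=
  [seq @submxrow _ s.+1 (fun _ => k) 1 u i | i <- enum 'I_s.+1].

Lemma size_useq k s u : size (@useq k s u) = s.+1.
Proof. by rewrite size_map size_enum_ord. Qed.

Lemma nth_useq k s u (i : 'I_s.+1) : nth 0 (@useq k s u) i = @submxrow _ s.+1 (fun _ => k) 1 u i.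
Proof. by rewrite (nth_map ord0) ?size_enum_ord // nth_ord_enum. Qed.

Lemma sum_pick (V : zmodType) n (F : nat -> V) j :
  \sum_(i < n) (if j == val i then F i else 0) = if (j < n)%N then F j else 0.
Proof.
elim: n => [|n IH]; first by rewrite big_ord0.
rewrite big_ord_recr /= IH.
have [h|h|->] := ltngtP j n.
- by rewrite ltnS (ltnW h) addr0.
- by rewrite ltnS leqNgt h addr0.
- by rewrite ltnSn add0r.
Qed.

Lemma block_eq k m s (G : 'M['F_2]_(k, m)) (u : 'rV['F_2]_(\sum_(i < s.+1) k)) :
  u *m G_total s G =
  @mxrow _ s.+2 (fun _ => (m + m)%N) 1 (fun j => cw_coef G (useq u) j).
Proof.
rewrite -[u in LHS](@submxrowK _ s.+1 (fun _ => k)) /G_total mul_mxrow_mxblock.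
apply/eq_mxrow => j.
have nE : forall i : 'I_s.+1, @submxrow _ s.+1 (fun _ => k) 1 u i = nth 0 (useq u) i.
  by move=> i; rewrite nth_useq.
have nD : forall i, (s.+1 <= i)%N -> nth 0 (useq u) i = 0.
  by move=> i hi; rewrite nth_default // size_useq.
transitivity (\sum_(i < s.+1)
   ((if val j == val i then nth 0 (useq u) i *m UM_G0 G else 0) +
    (if val j == (val i).+1 then nth 0 (useq u) i *m UM_G1 G else 0))).
  apply: eq_bigr => i _; rewrite nE.
  case: eqP => [->|_]; first by rewrite (ltn_eqF (ltnSn _)) addr0.
  by case: eqP => _; rewrite ?mulmx0 ?add0r.
rewrite big_split /= (sum_pick _ (fun i => nth 0 (useq u) i *m UM_G0 G)).
have -> : (if (j < s.+1)%N then nth 0 (useq u) j *m UM_G0 G else 0) =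
          nth 0 (useq u) j *m UM_G0 G.
  by case: ifP => // /negbT; rewrite -leqNgt => /nD ->; rewrite mul0mx.
case: j => [[|j] hj] /=.
  by rewrite big1 // /cw_coef mul0mx !addr0.
under eq_bigr do rewrite eqSS.
rewrite (sum_pick _ (fun i => nth 0 (useq u) i *m UM_G1 G)).
by rewrite /cw_coef; case: ifP => // /negbT; rewrite -leqNgt => /nD ->; rewrite mul0mx.
Qed.

Lemma wt_nz m (v : 'rV['F_2]_m) : (0 < wt v)%N -> v != 0.
Proof. by apply: contraTneq => ->; rewrite wt0. Qed.

Theorem theorem5p1 (k : nat) (hk : (2 <= k)%N) (G : 'M['F_2]_(k, 2 ^ k - 1))
  (hG : simplex_gen G) :
  (forall s : nat, is_min (block_weights s G) (3 * 2 ^ (k - 1))) /\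
  is_min (column_weights G 0) (2 ^ k) /\
  is_min (free_weights G) (3 * 2 ^ (k - 1)) /\
  (forall j : nat, (1 <= j)%N -> is_min (column_weights G j) (3 * 2 ^ (k - 1))).
Proof.
set h := (2 ^ (k - 1))%N.
have hpos : (0 < h)%N by rewrite expn_gt0.
have h2 : (2 ^ k = 2 * h)%N.
  by rewrite /h -expnS; congr (2 ^ _)%N; lia.
have cwwt u : cw_wt G u = (h * \sum_(i < (size u).+1) gg u i)%N.
  by rewrite /cw_wt big_distrr /=; apply: eq_bigr => i _; rewrite (wt_cw hG).
have lower_free u : (exists i, cw_coef G u i != 0) -> (3 * h <= cw_wt G u)%N.
  move=> /cw_nz /comb hc; rewrite cwwt mulnC leq_mul2l hc orbT //.
pose e : 'rV['F_2]_k := const_mx 1.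
have e0 : e != 0.
  apply/eqP => /matrixP /(_ 0 (Ordinal (leq_trans (isT : (0 < 2)%N) hk))).
  by rewrite !mxE; apply/eqP; rewrite oner_eq0.
have sum_e N : (2 <= N)%N -> (\sum_(i < N) wt (cw_coef G [:: e] i) = 3 * h)%N.
  case: N => [|[|N]] // _.
  rewrite big_ord_recl big_ord_recl big1 => [|i _]; last first.
    by rewrite (wt_cw hG) /gg /prevs /= nth_nil addr0 eqxx muln0.
  rewrite !(wt_cw hG) /gg /prevs /= addr0 add0r e0 eqxx /=; lia.
have ce0 : cw_coef G [:: e] 0 != 0.
  by apply: wt_nz; rewrite (wt_cw hG) /gg /prevs /= addr0 e0 muln_gt0 hpos.
have c0nz u : cw_coef G u 0 != 0 -> nth 0 u 0 != 0.
  by apply: contra => /eqP h0; rewrite cwE /prevs h0 !mul0mx addr0.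
split; [|split; [|split]].
- move=> s; split.
    pose u := @mxrow _ s.+1 (fun _ => k) 1 (fun i => if i == ord0 then e else 0).
    have nu i : nth 0 (useq u) i = nth 0 [:: e] i.
      case: (ltnP i s.+1) => hi; last first.
        by rewrite !nth_default ?size_useq //; exact: leq_ltn_trans (leq0n s) hi.
      rewrite (nth_useq u (Ordinal hi)) mxrowK /=.
      by case: i hi => [|i] hi; rewrite -val_eqE /= ?nth_nil.
    have cwu j : cw_coef G (useq u) j = cw_coef G [:: e] j.
      by rewrite !cwE /prevs; case: j => [|j]; rewrite !nu.
    have wu : wt (u *m G_total s G) = (3 * h)%N.
      rewrite block_eq wt_mxrow -(sum_e s.+2) //.
      by apply: eq_bigr => j _; rewrite cwu.
    by exists u; split => //; apply: wt_nz; rewrite wu muln_gt0 hpos.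
  move=> w [u [unz <-]].
  rewrite block_eq wt_mxrow.
  have -> : (\sum_(j < s.+2) wt (cw_coef G (useq u) j))%N = cw_wt G (useq u).
    by rewrite /cw_wt size_useq.
  apply: lower_free.
  move: unz; rewrite block_eq => unz.
  have [j hj] : exists j : 'I_s.+2, cw_coef G (useq u) j != 0.
    apply/existsP; apply: contraR unz => /existsPn H.
    have -> : @mxrow _ s.+2 (fun _ => (2 ^ k - 1 + (2 ^ k - 1))%N) 1
         (fun j => cw_coef G (useq u) j) =
       @mxrow _ s.+2 (fun _ => (2 ^ k - 1 + (2 ^ k - 1))%N) 1 (fun _ => 0).
      by apply: eq_mxrow => j; apply/eqP; have := H j; rewrite negbK.
    by rewrite mxrow0.
  by exists j.
- split.
    exists [:: e]; split => //.
    by rewrite big_ord1 (wt_cw hG) /gg /prevs /= addr0 e0 h2 mulnC.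
  move=> w [u [u0 <-]]; rewrite big_ord1 (wt_cw hG) /gg /prevs addr0 (c0nz _ u0) h2 mulnC.
  by [].
- split.
    exists [:: e]; split; first by exists 0%N.
    by rewrite /cw_wt /= sum_e.
  by move=> w [u [hu <-]]; apply: lower_free.
- move=> j hj; split.
    exists [:: e]; split => //; exact: sum_e.
  move=> w [u [u0 <-]].
  have nu0 := c0nz _ u0.
  under eq_bigr do rewrite (wt_cw hG).
  rewrite -big_distrr /= -/h [(h * _)%N]mulnC leq_mul2r eqn0Ngt hpos /=.
  have := @sum_ge2 (gg u) j.+1 0 (hj : (1 < j.+1)%N).
  have g0 : gg u 0 = 2 by rewrite /gg /prevs addr0 nu0.
  have g1 : (1 <= gg u 1)%N.
    rewrite /gg /prevs /=; have [->|hn] := eqVneq (nth 0 u 1) 0; first by rewrite add0r nu0.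
    by rewrite addnC; apply: leq_trans (leq_addr _ _); rewrite lt0b.
  by move=> H; apply: leq_trans H; rewrite g0 -[3%N]/(2 + 1)%N leq_add2l.
Qed.
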